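(* Let $(\mathbf A,\perp,\{\mathsf{t},\mathsf{f}\})$ be an $\mathfrak{N}_w^1$-model with $|A|>1$. Then the Dedekind–MacNeille completion $\mathbb{DM}(\mathcal{I}(\mathbf A))=(\mathrm{DM}(\mathcal{I}(\mathbf A)),\land,\lor,{}^{*},\emptyset,A)$ of the poset with antitone involution $\mathcal{I}(\mathbf A)=(A,\precsim,{}^{*})$ is not an orthomodular lattice.
   Context: A weak $\mathcal{N}$-algebra is an algebra $(A,\otimes,\circ,{}^{*})$ of type $(2,2,1)$ with $\otimes,\circ$ commutative, $x^{**}=x$, and $(x\otimes y)\circ z=(x\otimes z)\circ y$. Term operations: $x\Rightarrow y:=(x\circ y^{*})^{*}$, $x\Leftrightarrow y:=(x\Rightarrow y)\otimes(y\Rightarrow x)$, $x\not\Leftrightarrow y:=(x\Leftrightarrow y)^{*}$, $x\not\Leftrightarrow y\not\Leftrightarrow z:=((x\not\Leftrightarrow y)\otimes(x\not\Leftrightarrow z))\otimes(y\not\Leftrightarrow z)$, $x\oplus y:=(x^{*}\otimes y^{*})^{*}$. With $\mathsf{t}\ne\mathsf{f}$ symbols not in $A$, $\overline A=A\cup\{\mathsf{t},\mathsf{f}\}$, an $\mathfrak{N}_w$-model is $(\mathbf A,\perp,\{\mathsf{t},\mathsf{f}\})$, $\mathbf A$ a weak $\mathcal{N}$-algebra, $\perp\subseteq\overline A\times\overline A$, such that for all $x,y,z\in A$: (a) $x\perp x^{*}$; (b) $x\perp y^{*}$ and $y\perp x^{*}$ imply $x=y$; (c) $x\perp y$ iff $x\circ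 y\perp\mathsf{t}$; (d) $x\perp\mathsf{t}$ iff $x^{*}\perp\mathsf{f}$; (e) $x\perp\mathsf{f}$ and $y\perp\mathsf{f}$ iff $x\otimes y\perp\mathsf{f}$; (f) $(x\circ y^{*})^{*}\perp(x\circ y)^{*}$; (g) $x\perp y$ and $x\perp\mathsf{f}$ imply $y\perp\mathsf{t}$; (h) $(x\not\Leftrightarrow y\not\Leftrightarrow z)\perp((x\Rightarrow y)\Rightarrow((y\Rightarrow z)\Rightarrow(x\Rightarrow z)))^{*}$. An $\mathfrak{N}_w^1$-model is an $\mathfrak{N}_w$-model such that for all $x,y,z\in A$: $x\perp\mathsf{f}$ implies $x\oplus y\perp\mathsf{f}$; and $x\perp y^{*}$, $y\perp z^{*}$ imply $x\perp z^{*}$. On $A$, $x\precsim y$ iff $x\perp y^{*}$; $(A,\precsim,{}^{*})$ is a poset with antitone involution. For $X\subseteq A$: $L(X)=\{y: y\precsim x\ \forall x\in X\}$, $U(X)=\{y: x\precsim y\ \forall x\in X\}$, $X'=\{x^{*}:x\in X\}$. $\mathrm{DM}(\mathcal{I}(\mathbf A))=\{X\subseteq A: L(U(X))=X\}$, ordered by inclusion, with $X\land Y=X\cap Y$, $X\lor Y=L(U(X\cup Y))$, $X^{*}=L(X')$, bottom $\emptyset$ and top $A$. An ortholattice $(B,\land,\lor,{}^{*},0,1)$ is orthomodular if $x\le y$ and $x^{*}\land y=0$ imply $x=y$. *)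

(* Defs.v *)
Set Implicit Arguments.

Section Defs.
Variable A : Type.
Variables (otimes circ : A -> A -> A) (star : A -> A).

Definition weak_N_algebra : Prop :=
  (forall x y, otimes x y = otimes y x) /\
  (forall x y, circ x y = circ y x) /\
  (forall x, star (star x) = x) /\
  (forall x y z, circ (otimes x y) z = circ (otimes x z) y).

Definition imp (x y : A) : A := star (circ x (star y)).
Definition biimp (x y : A) : A := otimes (imp x y) (imp y x).
Definition nbiimp (x y : A) : A := star (biimp x y).
Definition nbiimp3 (x y z : A) : A :=
  otimes (otimes (nbiimp x y) (nbiimp x z)) (nbiimp y z).
Definition oplus (x y : A) : A := star (otimes (star x) (star y)).

End Defs.

Inductive ext (A : Type) : Type :=
  | El : A -> ext A
  | Tt : ext A
  | Ff : ext A.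
Arguments Tt {A}.
Arguments Ff {A}.

Section Models.
Variable A : Type.
Variables (otimes circ : A -> A -> A) (star : A -> A).
Variable perp : ext A -> ext A -> Prop.

Definition Nw_model : Prop :=
  weak_N_algebra otimes circ star /\
  (* (a) *) (forall x, perp (El x) (El (star x))) /\
  (* (b) *) (forall x y, perp (El x) (El (star y)) -> perp (El y) (El (star x)) -> x = y) /\
  (* (c) *) (forall x y, perp (El x) (El y) <-> perp (El (circ x y)) Tt) /\
  (* (d) *) (forall x, perp (El x) Tt <-> perp (El (star x)) Ff) /\
  (* (e) *) (forall x y, (perp (El x) Ff /\ perp (El y) Ff) <-> perp (El (otimes x y)) Ff) /\
  (* (f) *) (forall x y, perp (El (star (circ x (star y)))) (El (star (circ x y)))) /\
  (* (g) *) (forall x y, perp (El x) (El y) -> perp (El x) Ff -> perp (El y) Tt) /\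
  (* (h) *) (forall x y z,
               perp (El (nbiimp3 otimes circ star x y z))
                    (El (star (imp circ star (imp circ star x y)
                                 (imp circ star (imp circ star y z) (imp circ star x z)))))).

Definition Nw1_model : Prop :=
  Nw_model /\
  (forall x y, perp (El x) Ff -> perp (El (oplus otimes star x y)) Ff) /\
  (forall x y z, perp (El x) (El (star y)) -> perp (El y) (El (star z)) ->
                 perp (El x) (El (star z))).

Definition prec (x y : A) : Prop := perp (El x) (El (star y)).

Definition lower (X : A -> Prop) : A -> Prop := fun y => forall x, X x -> prec y x.
Definition upper (X : A -> Prop) : A -> Prop := fun y => forall x, X x -> prec x y.
Definition sprime (X : A -> Prop) : A -> Prop := fun y => exists x, X x /\ y = star x.
Definition seteq (X Y : A -> Prop) : Prop := forall x, X x <-> Y x.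
Definition subset (X Y : A -> Prop) : Prop := forall x, X x -> Y x.

Definition inDM (X : A -> Prop) : Prop := seteq (lower (upper X)) X.

Definition DMmeet (X Y : A -> Prop) : A -> Prop := fun x => X x /\ Y x.
Definition DMjoin (X Y : A -> Prop) : A -> Prop := lower (upper (fun x => X x \/ Y x)).
Definition DMstar (X : A -> Prop) : A -> Prop := lower (sprime X).
Definition DMbot : A -> Prop := fun _ => False.
Definition DMtop : A -> Prop := fun _ => True.

Definition DM_orthomodular : Prop :=
  forall X Y, inDM X -> inDM Y -> subset X Y ->
    seteq (DMmeet (DMstar X) Y) DMbot -> seteq X Y.

End Models.

(* Main.v *)
Require Import Defs.

Theorem corollary6p19 (A : Type) (otimes circ : A -> A -> A) (star : A -> A)
    (perp : ext A -> ext A -> Prop) :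
  Nw1_model otimes circ star perp ->
  (exists x y : A, x <> y) ->
  ~ DM_orthomodular star perp.
Proof.
  intros H [x0 [y0 Hxy]] HOM.
  destruct H as [[[Hotc [Hcc [Hss Hid]]] [Ha [Hb [Hc [Hd [He [Hf [Hg Hh]]]]]]]] [Hplus Htr]].
  assert (Hsym : forall x y, perp (El x) (El y) -> perp (El y) (El x)).
  { intros x y H. apply Hc. rewrite Hcc. apply Hc. exact H. }
  assert (Hcol : forall z, perp (El z) Tt -> perp (El z) Ff -> False).
  { intros z HzT HzF.
    assert (HallT : forall w, perp (El w) Tt).
    { intro w.
      assert (H1 : perp (El (star z)) Ff) by (apply Hd; exact HzT).
      assert (H2 : perp (El (oplus otimes star (star z) (star w))) Ff) by (apply Hplus; exact H1).
      unfold oplus in H2. rewrite !Hss in H2.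
      assert (H4 : perp (El (otimes z (star (otimes z w)))) (El w)).
      { apply Hc. rewrite <- Hid. apply Hc. apply Ha. }
      assert (H5 : perp (El (otimes z (star (otimes z w)))) Ff).
      { apply He. split; [exact HzF | exact H2]. }
      exact (Hg _ _ H4 H5). }
    apply Hxy. apply Hb; apply Hc; apply HallT. }
  assert (HK : forall q, perp (El q) (El q) -> False).
  { intros q Hq.
    apply (Hcol (circ q q)).
    - apply Hc; exact Hq.
    - assert (H1 : perp (El (circ q (star q))) Tt) by (apply Hc; apply Ha).
      assert (H2 : perp (El (star (circ q (star q)))) Ff) by (apply Hd; exact H1).
      pose proof (Hf q q) as H3.
      assert (H4 : perp (El (star (circ q q))) Tt) by exact (Hg _ _ H3 H2).
      apply Hd in H4. rewrite Hss in H4. exact H4. }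
  assert (HID : forall x y z, perp (El (otimes x y)) (El z) -> perp (El (otimes x z)) (El y)).
  { intros x y z H. apply Hc. rewrite <- Hid. apply Hc. exact H. }
  assert (Hdown : forall u v v', perp (El u) (El v) -> perp (El v') (El (star v)) -> perp (El u) (El v')).
  { intros u v v' H1 H2. apply Hsym in H1. rewrite <- (Hss u) in H1.
    pose proof (Htr _ _ _ H2 H1) as H3. rewrite Hss in H3. apply Hsym. exact H3. }
  assert (Hanti : forall x y, perp (El x) (El (star y)) -> perp (El (star y)) (El (star (star x)))).
  { intros x y H. rewrite Hss. apply Hsym. exact H. }
  assert (Hmono : forall x y y', perp (El y) (El (star y')) ->
                  perp (El (otimes x y)) (El (star (otimes x y')))).
  { intros x y y' H.
    pose proof (Ha (otimes x y')) as H1.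
    apply HID in H1.
    assert (H2 : perp (El (otimes x (star (otimes x y')))) (El y)) by exact (Hdown _ _ _ H1 H).
    apply HID in H2. exact H2. }
  assert (HE : forall a b p, perp (El a) (El (star b)) -> perp (El p) (El (star b)) ->
                perp (El p) (El (star (star a))) -> False).
  { intros a b p Hab Hpb Hpa.
    set (m := otimes (star a) (star p)).
    set (q := otimes (star b) (star m)).
    pose proof (Hanti _ _ Hpb) as Hbp.
    pose proof (Hanti _ _ Hab) as Hba.
    assert (S1 : perp (El (otimes (star b) p)) (El (star m))).
    { pose proof (Hmono (star b) _ _ Hpa) as T1.
      pose proof (Hmono (star a) _ _ Hbp) as T2.
      rewrite (Hotc (star b) (star a)) in T1.
      exact (Htr _ _ _ T1 T2). }
    apply HID in S1. fold q in S1.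
    assert (S2 : perp (El q) (El (star (star p)))) by (rewrite Hss; exact S1).
    pose proof (Hmono (star b) _ _ S2) as T1.
    pose proof (Hmono (star p) _ _ Hba) as T2.
    rewrite (Hotc (star b) (star p)) in T1.
    rewrite (Hotc (star p) (star a)) in T2.
    pose proof (Htr _ _ _ T1 T2) as T3. fold m in T3.
    apply HID in T3. fold q in T3.
    exact (HK q T3). }
  set (x1 := circ x0 (star x0)).
  assert (HT1 : perp (El x1) Tt) by (apply Hc; apply Ha).
  assert (Habs : forall y, perp (El (otimes x1 y)) Tt).
  { intro y. assert (H1 : perp (El (star x1)) Ff) by (apply Hd; exact HT1).
    pose proof (Hplus _ (star y) H1) as H2. unfold oplus in H2. rewrite !Hss in H2.
    apply Hd. exact H2. }
  set (b1 := star (otimes x1 (star (otimes x1 x1)))).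
  assert (Hxb : perp (El x1) (El (star b1))).
  { unfold b1. rewrite Hss. apply Hsym. apply HID. apply Ha. }
  assert (HbF : perp (El b1) Ff).
  { unfold b1. apply Hd. apply Habs. }
  assert (Hne : x1 <> b1).
  { intro E. apply (Hcol x1 HT1). rewrite E. exact HbF. }
  pose proof (HOM (fun y => perp (El y) (El (star x1))) (fun y => perp (El y) (El (star b1)))) as HO.
  assert (Hprin : forall a, inDM star perp (fun y => perp (El y) (El (star a)))).
  { intros a. unfold inDM, seteq, lower, upper, prec. intro y. split.
    - intro H. apply H. intros x Hx. exact Hx.
    - intros H x Hx. exact (Hx y H). }
  assert (Hres : seteq (fun y => perp (El y) (El (star x1))) (fun y => perp (El y) (El (star b1)))).
  { apply HO.
    - apply Hprin.
    - apply Hprin.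
    - intros y Hy. exact (Htr _ _ _ Hy Hxb).
    - intro y. split.
      + intros [H1 H2]. unfold DMstar, lower, sprime, prec in H1.
        assert (H3 : perp (El y) (El (star (star x1)))).
        { apply H1. exists x1. split; [apply Ha | reflexivity]. }
        exact (HE x1 b1 y Hxb H2 H3).
      + intros []. }
  destruct (Hres b1) as [_ H4].
  assert (H5 : perp (El b1) (El (star x1))) by (apply H4; apply Ha).
  apply Hne. apply Hb; assumption.
Qed.
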